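(* Let $K$ be a field, $w(x)\in K[x]$ with $d=\deg w\ge2$, $\phi$ the $K$-algebra endomorphism of $K[x]$ with $\phi(x)=w(x)$, and $\delta=\mathrm{id}-\phi$. Let $W=K[w(x)]$ and $U$ the $K$-subspace spanned by $x^m$ for positive integers $m$ not divisible by $d$; for $f\in K[x]$ write uniquely $f=f_1+f_2$ with $f_1\in U$, $f_2\in W$, and set $\ell(f)=\deg f_1$ if $f_1\ne0$, $\ell(f)=0$ otherwise. Then for every nonzero $f\in\operatorname{Im}\delta$: 1) if $f\in W$, say $f(x)=\tilde f(w(x))$ with $\tilde f\in K[x]$, then $\tilde f\in\operatorname{Im}\delta$; 2) if $f\notin W$, then $\deg f\ge d\,\ell(f)\ge d$.
   Context: $\mathrm{id}$ is the identity map of $K[x]$. *)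

(* Defs.v *)
From HB Require Import structures.
From mathcomp Require Import all_boot all_order all_algebra.
Set Implicit Arguments. Unset Strict Implicit. Unset Printing Implicit Defensive.
Import GRing.Theory.
Local Open Scope ring_scope.

(* degree of a polynomial (deg 0 := 0) *)
Definition pdeg (K : fieldType) (p : {poly K}) : nat := (size p).-1.

Definition phi (K : fieldType) (w : {poly K}) (f : {poly K}) : {poly K} := f \Po w.

Definition delta (K : fieldType) (w : {poly K}) (f : {poly K}) : {poly K} :=
  f - phi w f.

Definition in_Im_delta (K : fieldType) (w f : {poly K}) : Prop :=
  exists g : {poly K}, f = delta w g.

Definition in_W (K : fieldType) (w f : {poly K}) : Prop :=
  exists h : {poly K}, f = h \Po w.

(* f in U = span{x^m : m > 0, ~ d | m} with d = deg w; i.e. every coefficient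
   of index divisible by d (including index 0) vanishes *)
Definition in_U (K : fieldType) (w f : {poly K}) : Prop :=
  forall i : nat, (pdeg w %| i)%N -> f`_i = 0.

(* ell applied to the U-component f1 of f : deg f1 if f1 <> 0, else 0 *)
Definition ell_of (K : fieldType) (f1 : {poly K}) : nat :=
  if f1 == 0 then 0%N else pdeg f1.

(* Main.v *)
Require Import Defs.
From mathcomp Require Import all_boot all_order all_algebra.
From mathcomp Require Import ring zify.
Import GRing.Theory.
Local Open Scope ring_scope.
Set Implicit Arguments. Unset Strict Implicit.

Lemma aux4 (V : comNzRingType) (a b c d : V) : a - b - c - (a - d) = d - c - b.
Proof. ring. Qed.

Section S.
Variables (K : fieldType) (w : {poly K}).
Hypothesis hd : (2 <= pdeg w)%N.

Lemma sw : (1 < size w)%N.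
Proof. move: hd; rewrite /pdeg; case: (size w) => [|[|n]] //. Qed.

Lemma lw0 : lead_coef w != 0.
Proof. rewrite lead_coef_eq0 -size_poly_gt0; apply: ltn_trans sw. done. Qed.

Lemma pdeg_comp (h : {poly K}) : pdeg (h \Po w) = (pdeg h * pdeg w)%N.
Proof. exact: size_comp_poly. Qed.

Lemma U_ndvd u : in_U w u -> u != 0 -> ~~ (pdeg w %| pdeg u)%N.
Proof.
move=> hU u0; apply/negP => hdv; move: (hU _ hdv).
rewrite /pdeg -lead_coefE => /eqP; rewrite lead_coef_eq0; exact/negP.
Qed.

Lemma UW0 u h : in_U w u -> u = h \Po w -> u = 0.
Proof.
move=> hU hu; apply/eqP; apply/negPn/negP => u0.
move: (U_ndvd hU u0); rewrite hu pdeg_comp dvdn_mull //.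
Qed.

Lemma U0 : in_U w 0. Proof. by move=> i _; rewrite coef0. Qed.
Lemma W0 : in_W w 0. Proof. by exists 0; rewrite comp_poly0. Qed.
Lemma UD a b : in_U w a -> in_U w b -> in_U w (a + b).
Proof. by move=> ha hb i hi; rewrite coefD ha // hb // addr0. Qed.
Lemma UB a b : in_U w a -> in_U w b -> in_U w (a - b).
Proof. by move=> ha hb i hi; rewrite coefB ha // hb // subr0. Qed.
Lemma WD a b : in_W w a -> in_W w b -> in_W w (a + b).
Proof. by move=> [x ->] [y ->]; exists (x + y); rewrite comp_polyD. Qed.
Lemma WB a b : in_W w a -> in_W w b -> in_W w (a - b).
Proof. by move=> [x ->] [y ->]; exists (x - y); rewrite comp_polyB. Qed.

Lemma sub_lead (g q : {poly K}) n : size g = n.+1 -> (size q <= n.+1)%N ->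
  q`_n = lead_coef g -> (size (g - q)%R <= n)%N.
Proof.
move=> sg sq qn; apply/leq_sizeP => j; rewrite leq_eqVlt => /orP [/eqP <-|hj].
  by rewrite coefB qn lead_coefE sg subrr.
rewrite coefB; move/leq_sizeP: sq => -> //.
have : (size g <= n.+1)%N by rewrite sg.
by move/leq_sizeP => -> //; rewrite subr0.
Qed.

Lemma decomp g : exists g1 g2, in_U w g1 /\ in_W w g2 /\ g = g1 + g2.
Proof.
move: (leqnn (size g)); elim: (size g) {-2}g => [|n IH] {}g.
  move/size_poly_leq0P => ->; exists 0, 0; split; [exact U0|split; [exact W0|by rewrite addr0]].
rewrite leq_eqVlt => /orP [/eqP sg|]; last by apply: IH.
have g0 : g != 0 by rewrite -size_poly_gt0 sg.
set c := lead_coef g.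
have c0 : c != 0 by rewrite lead_coef_eq0.
have [hdv|hndv] := boolP (pdeg w %| n)%N.
  set k := (n %/ pdeg w)%N.
  set a := c / lead_coef w ^+ k.
  have a0 : a != 0 by rewrite mulf_neq0 // invr_eq0 expf_neq0 // lw0.
  set h := a *: 'X^k.
  have sh : size h = k.+1 by rewrite size_scale // size_polyXn.
  have lh : lead_coef h = a by rewrite lead_coefZ lead_coefXn mulr1.
  set q := h \Po w.
  have lq : lead_coef q = c.
    by rewrite lead_coef_comp ?sw // lh sh /= /a mulfVK // expf_neq0 // lw0.
  have q0 : q != 0 by rewrite -lead_coef_eq0 lq.
  have sq : size q = n.+1.
    have := pdeg_comp h; rewrite /pdeg sh /= -/q divnK // => <-.
    by rewrite prednK // size_poly_gt0.
  have qn : q`_n = c by rewrite -lq lead_coefE sq.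
  have [g1 [g2 [h1 [h2 e]]]] := IH (g - q) (sub_lead sg (eq_leq sq) qn).
  exists g1, (g2 + q); split => //; split; first by apply: WD => //; exists h.
  by rewrite addrA -e subrK.
set q := c *: 'X^n.
have sq : (size q <= n.+1)%N by rewrite size_scale // size_polyXn.
have qn : q`_n = lead_coef g by rewrite coefZ coefXn eqxx mulr1.
have [g1 [g2 [h1 [h2 e]]]] := IH (g - q) (sub_lead sg sq qn).
exists (g1 + q), g2; split; last by split => //; rewrite addrAC -e subrK.
apply: UD => // i hi; rewrite coefZ coefXn.
case: eqP => [ein|]; last by rewrite mulr0.
by subst i; rewrite hi in hndv.
Qed.

Lemma comp_inj p q : p \Po w = q \Po w -> p = q.
Proof.
move=> e; apply/eqP; rewrite -subr_eq0 -lead_coef_eq0.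
have := lead_coef_comp (p - q) sw; rewrite comp_polyB e subrr lead_coef0.
move/esym/eqP; rewrite mulf_eq0 expf_eq0 (negbTE lw0) andbF orbF //.
Qed.

End S.

Theorem lemma3p10 (K : fieldType) (w : {poly K}) (hd : (2 <= pdeg w)%N)
  (f : {poly K}) (hf0 : f != 0) (hf : in_Im_delta w f) :
  (forall ft : {poly K}, f = ft \Po w -> in_Im_delta w ft) /\
  (~ in_W w f ->
     forall f1 f2 : {poly K}, in_U w f1 -> in_W w f2 -> f = f1 + f2 ->
       (pdeg w * ell_of f1 <= pdeg f)%N /\ (pdeg w <= pdeg w * ell_of f1)%N).
Proof.
have [g eg] := hf; rewrite /delta /phi in eg.
have [g1 [g2 [hU1 [hW2 eg12]]]] := decomp hd g.
have eg1 : g1 = g - g2 by rewrite eg12 addrK.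
have [hh ehh] := hW2.
split.
  move=> ft eft.
  have g10 : g1 = 0.
    apply: (UW0 (h := ft + g - hh) hU1).
    by rewrite comp_polyB comp_polyD -eft -ehh eg subrK eg1.
  have egh : g = hh \Po w by rewrite eg12 g10 add0r.
  exists hh; rewrite /delta /phi; apply: (comp_inj hd).
  by rewrite -eft comp_polyB eg egh.
move=> nW f1 f2 hU hW ef.
have ef1 : f1 = f - f2 by rewrite ef addrK.
have e : f1 - g1 = (g2 - f2) - (g \Po w)
  by rewrite ef1 eg1 eg aux4.
have [k ek] : in_W w (f1 - g1).
  rewrite e; apply: WB; first exact: WB hW2 hW.
  by exists g.
have := UW0 (UB hU hU1) ek; move/eqP; rewrite subr_eq0 => /eqP fg.
have f10 : f1 != 0.
  by apply/negP => /eqP f10; apply: nW; rewrite ef f10 add0r.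
have nd := U_ndvd hU f10.
have p1 : (0 < pdeg f1)%N.
  by rewrite lt0n; apply/negP => /eqP h0; rewrite h0 dvdn0 in nd.
rewrite /ell_of (negbTE f10); split; last by rewrite leq_pmulr.
have le1 : (pdeg g1 <= pdeg g)%N.
  rewrite leqNgt; apply/negP => hlt.
  have s2 : size g2 = size g1.
    rewrite (_ : g2 = - g1 + g); last by rewrite eg12 addKr.
    by rewrite size_addl size_opp //; move: hlt; rewrite /pdeg; case: (size g1) => //=; case: (size g) => //=.
  have g10 : g1 != 0 by rewrite -fg.
  move: (U_ndvd hU1 g10); rewrite /pdeg -s2 -/(pdeg g2) ehh pdeg_comp.
  by rewrite dvdn_mull.
have sgw : (size g < size (g \Po w))%N.
  rewrite fg in p1.
  have h1 := size_comp_poly g w.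
  move: hd le1 p1 h1; rewrite /pdeg.
  move: (size w).-1 (size g1).-1 => D A.
  case: (size g) => [|a] /=; case: (size (g \Po w)) => [|b] /=; nia.
have -> : pdeg f = pdeg (g \Po w).
  by rewrite eg addrC /pdeg size_addl size_opp.
rewrite pdeg_comp fg mulnC leq_mul2r le1 orbT //.
Qed.
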